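(* Let $n\ge2$ and let $A$ be the generalized Cartan matrix of affine type $A_n^{(1)}$: $I=\mathbb Z/(n+1)\mathbb Z$, $a_{\bar i,\bar i}=2$, $a_{\bar i,\overline{i+1}}=a_{\bar i,\overline{i-1}}=-1$, and all other entries $0$. Then the set of quantum roots is exactly $$\mathcal Q(\Phi_+)=\Big\{\textstyle\sum_{t=0}^{l}\alpha_{\overline{k+t}}\ \Big|\ k\in\mathbb Z/(n+1)\mathbb Z,\ 0\le l\le n-1\Big\},$$ i.e. the sums of simple roots over proper nonempty cyclic intervals of $\mathbb Z/(n+1)\mathbb Z$.
   Context: Kac–Moody root datum $(A,X,Y,(\alpha_i)_{i\in I},(\alpha_i^\vee)_{i\in I})$: free $\mathbb Z$-modules $X,Y$ of finite rank with perfect pairing, linearly independent simple roots $(\alpha_i)\subset X$ and coroots $(\alpha_i^\vee)\subset Y$, $\langle\alpha_i^\vee,\alpha_j\rangle=a_{i,j}$. Simple reflections $r_i(x)=x-\langle\alpha_i^\vee,x\rangle\alpha_i$, $r_i(y)=y-\langle y,\alpha_i\rangle\alpha_i^\vee$, $W^v=\langle r_i\rangle$, real roots $\Phi=W^v\{\alpha_i\}$, $\Phi_+=\Phi\cap\bigoplus\mathbb Z_{\ge0}\alpha_i$; coroot $\beta^\vee=w(\alpha_i^\vee)$, $s_\beta=wr_iw^{-1}$ for $\beta=w(\alpha_i)$. $\mathrm{Inv}(w)=\{\alpha\in\Phi_+\mid w\alpha\in\Phi_-\}$; $\beta\in\Phi_+$ is quantum if $\langle\beta^\vee,\gamma\rangle=1$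 for all $\gamma\in\mathrm{Inv}(s_\beta)\setminus\{\beta\}$. *)

(* Defs.v *)
(* Concrete model of the real roots / coroots of a
   Kac-Moody root datum with generalized Cartan matrix A, in coordinates
   w.r.t. the simple roots (resp. simple coroots). *)
From mathcomp Require Import all_boot all_order all_algebra.
Set Implicit Arguments. Unset Strict Implicit. Unset Printing Implicit Defensive.
Import GRing.Theory Num.Theory.
Local Open Scope ring_scope.

Section RootDatum.
Variables (m : nat) (A : 'M[int]_m).

Definition sroot (i : 'I_m) : 'rV[int]_m := delta_mx 0 i.
Definition scoroot (i : 'I_m) : 'rV[int]_m := delta_mx 0 i.

(* <y, x> for y in the coroot lattice, x in the root lattice:
   <alpha_i^vee, alpha_j> = a_{i,j}, extended bilinearly *)
Definition pairing (y x : 'rV[int]_m) : int :=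
  \sum_(i < m) \sum_(j < m) y 0 i * A i j * x 0 j.

Definition reflX (i : 'I_m) (x : 'rV[int]_m) : 'rV[int]_m :=
  x - pairing (scoroot i) x *: sroot i.
Definition reflY (i : 'I_m) (y : 'rV[int]_m) : 'rV[int]_m :=
  y - pairing y (sroot i) *: scoroot i.

(* the word w = [:: i1; ...; ik] stands for r_{i1} ... r_{ik} in W^v *)
Definition actX (w : seq 'I_m) (x : 'rV[int]_m) := foldr reflX x w.
Definition actY (w : seq 'I_m) (y : 'rV[int]_m) := foldr reflY y w.

Definition is_root (x : 'rV[int]_m) : Prop :=
  exists (w : seq 'I_m) (i : 'I_m), x = actX w (sroot i).
Definition pos_root (x : 'rV[int]_m) : Prop :=
  is_root x /\ forall i, 0 <= x 0 i.
Definition neg_root (x : 'rV[int]_m) : Prop :=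
  is_root x /\ forall i, x 0 i <= 0.

(* beta in Phi_+ is quantum if for every presentation beta = w(alpha_i)
   (with beta^vee = w(alpha_i^vee), s_beta = w r_i w^{-1}) and every
   gamma in Inv(s_beta) \ {beta}, <beta^vee, gamma> = 1. *)
Definition quantum (beta : 'rV[int]_m) : Prop :=
  pos_root beta /\
  forall (w : seq 'I_m) (i : 'I_m), beta = actX w (sroot i) ->
    forall gamma, pos_root gamma ->
      neg_root (actX (w ++ i :: rev w) gamma) ->
      gamma <> beta ->
      pairing (actY w (scoroot i)) gamma = 1.

End RootDatum.

Definition affA (n : nat) : 'M[int]_n.+1 :=
  \matrix_(i, j)
    if i == j then (2 : int)
    else if ((j : nat) == (i.+1 %% n.+1)%N) || ((i : nat) == (j.+1 %% n.+1)%N)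
    then (-1 : int) else (0 : int).

(* Main.v *)
Require Import Defs.
From mathcomp Require Import all_boot all_order all_algebra zify ring.
Set Implicit Arguments. Unset Strict Implicit. Unset Printing Implicit Defensive.
Import GRing.Theory Num.Theory.
Local Open Scope ring_scope.

Section Gen.
Variables (m : nat) (A : 'M[int]_m).
Hypothesis symA : forall i j, A i j = A j i.
Hypothesis diagA : forall i, A i i = 2.

Lemma pairing_sym y x : pairing A y x = pairing A x y.
Proof.
rewrite /pairing exchange_big; apply: eq_bigr => i _; apply: eq_bigr => j _.
by rewrite symA; ring.
Qed.

Lemma pairingDr y x1 x2 : pairing A y (x1 + x2) = pairing A y x1 + pairing A y x2.
Proof.
rewrite /pairing -big_split; apply: eq_bigr => i _; rewrite -big_split /=.
by apply: eq_bigr => j _; rewrite mxE mulrDr.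
Qed.

Lemma pairingZr y c x : pairing A y (c *: x) = c * pairing A y x.
Proof.
rewrite /pairing mulr_sumr; apply: eq_bigr => i _; rewrite mulr_sumr.
by apply: eq_bigr => j _; rewrite mxE; ring.
Qed.

Lemma pairingNr y x : pairing A y (- x) = - pairing A y x.
Proof. by rewrite -scaleN1r pairingZr mulN1r. Qed.

Lemma pairingBr y x1 x2 : pairing A y (x1 - x2) = pairing A y x1 - pairing A y x2.
Proof. by rewrite pairingDr pairingNr. Qed.

Lemma pairingBl y1 y2 x : pairing A (y1 - y2) x = pairing A y1 x - pairing A y2 x.
Proof. by rewrite pairing_sym pairingBr !(pairing_sym x). Qed.

Lemma pairingZl c y x : pairing A (c *: y) x = c * pairing A y x.
Proof. by rewrite pairing_sym pairingZr pairing_sym. Qed.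

Lemma pairing_el i x : pairing A (sroot i) x = \sum_j A i j * x 0 j.
Proof.
rewrite /pairing (bigD1 i) //= [X in _ + X]big1 ?addr0.
  by apply: eq_bigr => j _; rewrite /sroot mxE !eqxx /= mul1r.
move=> k hk; apply: big1 => j _; rewrite /sroot mxE eqxx /=.
by rewrite (negbTE hk) /= !mul0r.
Qed.

Lemma pairing_ee i j : pairing A (sroot i) (sroot j) = A i j.
Proof.
rewrite pairing_el (bigD1 j) //= big1 ?addr0.
  by rewrite /sroot mxE !eqxx /= mulr1.
by move=> k hk; rewrite /sroot mxE eqxx /= (negbTE hk) /= mulr0.
Qed.

Lemma reflY_X i y : reflY A i y = reflX A i y.
Proof. by rewrite /reflY /reflX pairing_sym. Qed.

Lemma actY_X w y : actY A w y = actX A w y.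
Proof. by elim: w => //= a w IH; rewrite IH reflY_X. Qed.

Lemma reflXK i x : reflX A i (reflX A i x) = x.
Proof.
rewrite /reflX pairingBr pairingZr pairing_ee diagA.
apply/matrixP => a b; rewrite !mxE; ring.
Qed.

Lemma reflX_lin i x c y : reflX A i (x - c *: y) = reflX A i x - c *: reflX A i y.
Proof.
rewrite /reflX pairingBr pairingZr.
apply/matrixP => a b; rewrite !mxE; ring.
Qed.

Lemma actX_lin w x c y : actX A w (x - c *: y) = actX A w x - c *: actX A w y.
Proof. by elim: w => //= a w IH; rewrite IH reflX_lin. Qed.

Lemma reflX_inv i x y : pairing A (reflX A i x) (reflX A i y) = pairing A x y.
Proof.
rewrite /reflX pairingBl pairingZl !pairingBr !pairingZr pairing_ee diagA.
rewrite (pairing_sym x (sroot i)); ring.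
Qed.

Lemma actX_inv w x y : pairing A (actX A w x) (actX A w y) = pairing A x y.
Proof. by elim: w => //= a w IH; rewrite reflX_inv IH. Qed.

Lemma actX_rev w x : actX A w (actX A (rev w) x) = x.
Proof.
elim: w x => //= a w IH x.
by rewrite rev_cons /actX foldr_rcons -/(actX A _ _) -/(actX A _ _) IH reflXK.
Qed.

Lemma refl_formula w i g :
  actX A (w ++ i :: rev w) g =
  g - pairing A (actX A w (sroot i)) g *: actX A w (sroot i).
Proof.
rewrite /actX foldr_cat /= -/(actX A _ _) -/(actX A _ _).
rewrite {1}/reflX actX_lin actX_rev.
by rewrite -(actX_inv w (sroot i)) actX_rev.
Qed.

Lemma root_norm x : is_root A x -> pairing A x x = 2.
Proof. by case=> w [i ->]; rewrite actX_inv pairing_ee diagA. Qed.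

Lemma root_act w x : is_root A x -> is_root A (actX A w x).
Proof. by case=> w' [i ->]; exists (w ++ w'), i; rewrite /actX foldr_cat. Qed.

End Gen.
Section Aff.
Variable n : nat.
Hypothesis hn : (2 <= n)%N.
Local Notation N := n.+1.
Local Notation A := (affA n).

Definition oi (k t : nat) : 'I_N := inord ((k + t) %% N).

Lemma val_oi k t : (oi k t : nat) = ((k + t) %% N)%N.
Proof. by rewrite /oi inordK // ltn_pmod. Qed.

Lemma oi_eq k s t : (s < N)%N -> (t < N)%N -> (oi k s == oi k t) = (s == t).
Proof.
move=> hs ht; rewrite -val_eqE /= !val_oi.
by have := eqn_modDl k s t N; rewrite /= !(modn_small hs) !(modn_small ht) => ->.
Qed.

Lemma oi0 (i : 'I_N) : oi 0 i = i.
Proof. by apply: val_inj; rewrite /= val_oi add0n modn_small. Qed.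

Lemma oiz (i : 'I_N) : oi i 0 = i.
Proof. by apply: val_inj; rewrite /= val_oi addn0 modn_small. Qed.

Lemma oi_add (k : nat) s t : oi (oi k s) t = oi k (s + t).
Proof. by apply: val_inj; rewrite /= !val_oi modnDml addnA. Qed.

Lemma oi_N k s : oi k (s + N) = oi k s.
Proof. by apply: val_inj; rewrite /= !val_oi addnA modnDr. Qed.

Lemma oi_Nz (i : 'I_N) : oi i N = i.
Proof. by apply: val_inj; rewrite /= val_oi modnDr modn_small. Qed.

Definition nxt (i : 'I_N) := oi i 1.
Definition prv (i : 'I_N) := oi i n.

Lemma prv_nxt i : prv (nxt i) = i.
Proof. by rewrite /prv /nxt oi_add add1n oi_Nz. Qed.

Lemma nxt_prv i : nxt (prv i) = i.
Proof. by rewrite /prv /nxt oi_add addn1 oi_Nz. Qed.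

Lemma affA_E i j : A i j = (j == i)%:R * 2 - (j == nxt i)%:R - (j == prv i)%:R.
Proof.
have hN1 : (1 < N)%N by apply: (leq_trans hn).
have hnN : (n < N)%N by [].
have d1 : (nxt i == i) = false by rewrite /nxt -{2}(oiz i) oi_eq.
have d2 : (prv i == i) = false.
  by rewrite /prv -{2}(oiz i) oi_eq //; case: (n) hn.
have d3 : (nxt i == prv i) = false.
  by rewrite /prv /nxt oi_eq //; case: (n) hn => // -[].
have e1 : ((j:nat) == (i.+1 %% N)%N) = (j == nxt i).
  by rewrite -val_eqE /= val_oi addn1.
have e2 : ((i:nat) == (j.+1 %% N)%N) = (j == prv i).
  apply/idP/idP => /eqP h.
    apply/eqP; have -> : i = nxt j by apply: val_inj; rewrite /= h val_oi addn1.
    by rewrite prv_nxt.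
  by rewrite h; apply/eqP; have := f_equal val (nxt_prv i); rewrite /= val_oi addn1 => ->.
rewrite /affA mxE e1 e2 (eq_sym i j).
case: (eqVneq j i) => [->|hji] /=.
  by rewrite [i == nxt i]eq_sym d1 [i == prv i]eq_sym d2 /=; ring.
case: (eqVneq j (nxt i)) => [->|hjn] /=; first by rewrite d3 /=; ring.
by case: (j == prv i) => /=; ring.
Qed.

Lemma sum_ind (a : 'I_N) (F : 'I_N -> int) : \sum_j (j == a)%:R * F j = F a.
Proof.
rewrite (bigD1 a) //= [X in _ + X]big1 ?addr0; first by rewrite eqxx mul1r.
by move=> j /negbTE ->; rewrite mul0r.
Qed.

Lemma rowsum i (x : 'rV[int]_N) :
  \sum_j A i j * x 0 j = 2 * x 0 i - x 0 (nxt i) - x 0 (prv i).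
Proof.
under eq_bigr => j _ do rewrite affA_E !mulrBl.
rewrite !sumrB !sum_ind.
have -> : \sum_j (j == i)%:R * 2 * x 0 j = \sum_j (j == i)%:R * (2 * x 0 j).
  by apply: eq_bigr => j _; rewrite mulrA.
by rewrite sum_ind.
Qed.

Lemma pairing_row y x :
  pairing A y x = \sum_i y 0 i * (2 * x 0 i - x 0 (nxt i) - x 0 (prv i)).
Proof.
rewrite /pairing; apply: eq_bigr => i _; rewrite -rowsum mulr_sumr.
by apply: eq_bigr => j _; rewrite mulrA.
Qed.

Lemma nxt_inj : injective nxt.
Proof. exact: can_inj prv_nxt. Qed.

Lemma Qform x : pairing A x x = \sum_i (x 0 i - x 0 (nxt i)) ^+ 2.
Proof.
have e1 : \sum_i x 0 i * x 0 (prv i) = \sum_i x 0 i * x 0 (nxt i).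
  rewrite (reindex_inj nxt_inj) /=; apply: eq_bigr => i _.
  by rewrite prv_nxt mulrC.
have e2 : \sum_i x 0 (nxt i) ^+ 2 = \sum_i x 0 i ^+ 2.
  by rewrite [RHS](reindex_inj nxt_inj).
have -> : \sum_i (x 0 i - x 0 (nxt i)) ^+ 2 =
   \sum_i (2 * x 0 i ^+ 2 - 2 * (x 0 i * x 0 (nxt i))) +
     (\sum_i x 0 (nxt i) ^+ 2 - \sum_i x 0 i ^+ 2).
  by rewrite -sumrB -big_split /=; apply: eq_bigr => i _; ring.
rewrite e2 subrr addr0 pairing_row.
have -> : \sum_i x 0 i * (2 * x 0 i - x 0 (nxt i) - x 0 (prv i)) =
  \sum_i (2 * x 0 i ^+ 2 - x 0 i * x 0 (nxt i)) - \sum_i x 0 i * x 0 (prv i).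
  by rewrite -sumrB; apply: eq_bigr => i _; ring.
rewrite e1 -sumrB; apply: eq_bigr => i _; ring.
Qed.

Lemma Q_ge0 x : 0 <= pairing A x x.
Proof. by rewrite Qform; apply: sumr_ge0 => i _; rewrite sqr_ge0. Qed.

Definition ivec (k l : nat) : 'rV[int]_N := \sum_(t < l.+1) sroot (oi k t).

Lemma sroot_E (i j : 'I_N) : (sroot i) 0 j = (j == i)%:R.
Proof. by rewrite /sroot mxE eqxx. Qed.

Lemma ivec_E k l j : (ivec k l) 0 j = \sum_(t < l.+1) (j == oi k t)%:R.
Proof. by rewrite /ivec summxE; apply: eq_bigr => t _; rewrite sroot_E. Qed.

Lemma ivec_ge0 k l j : 0 <= (ivec k l) 0 j.
Proof. by rewrite ivec_E; apply: sumr_ge0 => t _; rewrite ler0n. Qed.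

Lemma ivec_oi k l t : (l < N)%N -> (t < N)%N -> (ivec k l) 0 (oi k t) = (t <= l)%:R.
Proof.
move=> hl ht; rewrite ivec_E.
have hs : forall s : 'I_l.+1, (s < N)%N by move=> s; apply: leq_trans (ltn_ord s) hl.
under eq_bigr => s _ do rewrite oi_eq //.
case: (leqP t l) => htl.
  rewrite (bigD1 (Ordinal (htl : (t < l.+1)%N))) //= eqxx big1 ?addr0 //.
  by move=> s hs'; rewrite eq_sym -val_eqE /= in hs'; rewrite (negbTE hs').
rewrite big1 // => s _; case: eqP => // hst.
by move: (ltn_ord s); rewrite -hst ltnS leqNgt htl.
Qed.

Lemma oi_surj (k : 'I_N) (j : 'I_N) : exists2 t, (t < N)%N & j = oi k t.
Proof.
exists ((j + (N - k)) %% N)%N; first by rewrite ltn_pmod.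
apply: val_inj; rewrite /= val_oi modnDmr addnCA subnKC ?modnDr ?modn_small //.
exact: ltnW.
Qed.

Lemma ivec_root (k : 'I_N) l : (l <= n - 1)%N -> is_root A (ivec k l).
Proof.
elim: l => [|l IH] hl.
  by exists [::], (oi k 0); rewrite /ivec big_ord1.
have hl' : (l <= n - 1)%N by apply: ltnW.
have hlN : (l.+2 < N)%N by move: hl; rewrite ltnS; case: (n) hn => // m _; rewrite subSS subn0.
have -> : ivec k l.+1 = reflX A (oi k l.+1) (ivec k l).
  rewrite /reflX pairing_el rowsum /nxt /prv !oi_add.
  rewrite addn1 addSnnS oi_N.
  have h1 : (l < N)%N by apply: ltnW; apply: ltnW.
  have h2 : (l.+1 < N)%N by apply: ltnW.
  rewrite !ivec_oi // ltnn [(l.+2 <= l)%N]leqNgt ltnW // leqnn /=.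
  rewrite /ivec [in LHS]big_ord_recr /=.
  by apply/matrixP => a b; rewrite !mxE; ring.
exact: (@root_act _ A [:: oi k l.+1] _ (IH hl')).
Qed.
Lemma lin1 (g : nat -> int) p : \sum_(t < p) (g t.+1 - g t) ^+ 2 = 0 ->
  forall t, (t <= p)%N -> g t = g 0%N.
Proof.
elim: p => [|p IH] h t ht; first by move: ht; rewrite leqn0 => /eqP ->.
move: h; rewrite big_ord_recr /= => /eqP; rewrite paddr_eq0; last first.
- by rewrite sqr_ge0.
- by apply: sumr_ge0 => i _; rewrite sqr_ge0.
case/andP => /eqP h1 /eqP h2.
case: (leqP t p) => htp; first exact: IH.
have -> : t = p.+1 by apply/eqP; rewrite eqn_leq ht htp.
rewrite -(IH h1 p (leqnn p)); apply/eqP; rewrite -subr_eq0 -sqrf_eq0; apply/eqP.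
exact: h2.
Qed.

Lemma lin2 p : forall (g : nat -> int), \sum_(t < p) (g t.+1 - g t) ^+ 2 = 1 ->
  g p = g 0%N - 1 ->
  exists l, [/\ (l < p)%N, (forall t, (t <= l)%N -> g t = g 0%N) &
     (forall t, (l < t)%N -> (t <= p)%N -> g t = g 0%N - 1)].
Proof.
elim: p => [|p IH] g h hp; first by move: h; rewrite big_ord0.
move: h; rewrite big_ord_recl /= => h.
have hr : 0 <= \sum_(i < p) (g (bump 0 i).+1 - g (bump 0 i)) ^+ 2.
  by apply: sumr_ge0 => i _; rewrite sqr_ge0.
have hs : forall t, g (bump 0 t) = g t.+1 by [].
case: (eqVneq (g 1%N - g 0%N) 0) => h0.
- have e : g 1%N = g 0%N by apply/eqP; rewrite -subr_eq0 h0.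
  move: h; rewrite h0 expr0n /= add0r => h.
  have hp' : g p.+1 = g 1%N - 1 by rewrite hp e.
  have [l [hl hA hB]] := IH (fun t => g t.+1) h hp'.
  exists l.+1; split => //.
    by case=> [|t] ht //=; rewrite hA // e.
  by case=> [|t] // ht ht'; rewrite hB // e.
- have hsq : 1 <= (g 1%N - g 0%N) ^+ 2.
    move: h0; set d := _ - _ => /eqP h0; rewrite expr2.
    have : d <= -1 \/ 1 <= d by lia.
    case=> hd'; nia.
  have h0r : \sum_(i < p) (g (bump 0 i).+1 - g (bump 0 i)) ^+ 2 = 0.
    move: h hsq hr; set S := \sum_(_ < _) _.
    move=> h hsq; lia.
  have hc := lin1 (g := fun t => g t.+1) (p := p) h0r.
  have e1 : g 1%N = g 0%N - 1 by rewrite -hp (hc p (leqnn p)).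
  exists 0%N; split => //; first by case.
  by case=> [|t] // _ ht; rewrite (hc t ht) e1.
Qed.
Lemma shift_sum (F : nat -> int) : (forall s, F (s + N)%N = F s) ->
  forall b, \sum_(t < N) F (b + t)%N = \sum_(t < N) F t.
Proof.
move=> FP; elim=> [|b IH]; first by apply: eq_bigr => t _; rewrite add0n.
rewrite -IH big_ord_recr big_ord_recl /= addSnnS FP addn0 addrC.
by congr (_ + _); apply: eq_bigr => i _; rewrite addSnnS.
Qed.

Lemma classify x : pairing A x x = 2 -> exists (k : 'I_N) (l : nat) (h : int),
  (l <= n - 1)%N /\ forall j, x 0 j = h + (ivec k l) 0 j.
Proof.
move=> hx.
pose f t := x 0 (oi 0 t).
have fP : forall t, f (t + N)%N = f t by move=> t; rewrite /f oi_N.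
have hQ : \sum_(t < N) (f t.+1 - f t) ^+ 2 = 2.
  rewrite -hx Qform; apply: eq_bigr => i _.
  have E1 : x 0 i = f i by rewrite /f oi0.
  have E2 : x 0 (nxt i) = f i.+1 by rewrite /f /nxt -{1}(oi0 i) oi_add addn1.
  by rewrite E1 E2; ring.
pose d t := f t.+1 - f t.
have [a ha] : exists a : 'I_N, d a = 1.
  case: (pickP (fun a : 'I_N => d a == 1)) => [a /eqP ha|hno]; first by exists a.
  exfalso.
  have hle : forall a : 'I_N, d a <= 0.
    move=> a; have := hno a => /= /eqP hne.
    have : (d a) ^+ 2 <= 2.
      rewrite -hQ (bigD1 a) //= lerDl; apply: sumr_ge0 => i _; exact: sqr_ge0.
    rewrite expr2 => hsq; nia.
  have hsum : \sum_(t < N) d t = 0.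
    rewrite /d -(big_mkord xpredT (fun t => f t.+1 - f t)) telescope_sumr //.
    by rewrite -{1}(add0n N) fP subrr.
  have hz : forall a : 'I_N, d a = 0.
    move=> a; apply/eqP; rewrite -oppr_eq0; apply/eqP.
    have hh := @psumr_eq0P _ _ xpredT (fun a : 'I_N => - d a).
    apply: hh => //; first by move=> b _; rewrite oppr_ge0.
    by rewrite sumrN hsum oppr0.
  move: hQ; rewrite big1 // => i _; have := hz i; rewrite /d => ->.
  by rewrite expr0n.
pose F s := (f s.+1 - f s) ^+ 2.
have FP : forall s, F (s + N)%N = F s by move=> s; rewrite /F -addSn !fP.
pose g t := f (a.+1 + t)%N.
have hg1 : \sum_(t < n) (g t.+1 - g t) ^+ 2 = 1.
  have := shift_sum FP a.+1; rewrite hQ big_ord_recr /= addSnnS FP.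
  rewrite /F -/(d a) ha expr1n => h.
  have : \sum_(i < n) F (a.+1 + i)%N = 1 by move: h; set S := \sum_(_ < _) _; lia.
  by move=> <-; apply: eq_bigr => i _; rewrite /g /F addnS.
have hg2 : g n = g 0%N - 1.
  rewrite /g addSnnS fP addn0; move: ha; rewrite /d => ha; lia.
have [l [hl hA hB]] := lin2 hg1 hg2.
exists (oi 0 a.+1), l, (g 0%N - 1); split; first by lia.
move=> j; have [t ht ->] := oi_surj (oi 0 a.+1) j.
have hlN : (l < N)%N by apply: ltnW.
rewrite ivec_oi // oi_add -/(f _) -/(g t).
case: (leqP t l) => htl; first by rewrite hA //= subrK.
by rewrite hB //= addr0.
Qed.
Lemma affsym i j : A i j = A j i.
Proof. by rewrite /affA !mxE (eq_sym j i) orbC. Qed.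

Lemma affdiag i : A i i = 2.
Proof. by rewrite /affA mxE eqxx. Qed.

Lemma Q0_const u : pairing A u u = 0 -> forall j j', u 0 j = u 0 j'.
Proof.
rewrite Qform => h0.
have hn0 : forall i, u 0 (nxt i) = u 0 i.
  move=> i; have e := @psumr_eq0P _ _ xpredT (fun i => (u 0 i - u 0 (nxt i)) ^+ 2)
     (fun b _ => sqr_ge0 _) h0 i isT.
  by apply/eqP; rewrite eq_sym -subr_eq0 -sqrf_eq0 e.
have ht : forall t, u 0 (oi 0 t) = u 0 (oi 0 0).
  by elim=> // t IH; rewrite -IH -(hn0 (oi 0 t)) /nxt oi_add addn1.
by move=> j j'; rewrite -(oi0 j) -(oi0 j') !ht.
Qed.

Lemma main beta : quantum A beta <->
  exists (k : 'I_N) (l : nat), (l <= n - 1)%N /\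
    beta = \sum_(t < l.+1) sroot (inord ((k + t) %% N) : 'I_N).
Proof.
have hnN : (n < N)%N by [].
split.
- move=> [[hroot hnn] hq].
  have [w [i hb]] := hroot.
  have hbb : pairing A beta beta = 2 := root_norm affsym affdiag hroot.
  have [k [l [h [hl hj]]]] := classify hbb.
  have hlN : (l < N)%N by lia.
  have hj0 : (ivec k l) 0 (oi k n) = 0.
    by rewrite ivec_oi // leqNgt (_ : (l < n)%N = true) //; lia.
  have hh : 0 <= h by have := hnn (oi k n); rewrite hj hj0 addr0.
  case: (eqVneq h 0) => [h0|hne].
    exists k, l; split => //; apply/matrixP => a j.
    by rewrite (ord1 a) hj h0 add0r.
  exfalso.
  have hgr := ivec_root k hl.
  have hgg : pairing A (ivec k l) (ivec k l) = 2 := root_norm affsym affdiag hgr.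
  have hd : pairing A (beta - ivec k l) (beta - ivec k l) = 0.
    rewrite Qform big1 // => j _; rewrite !mxE !hj; ring.
  have hbg : pairing A beta (ivec k l) = 2.
    move: hd; rewrite (pairingBl affsym) !pairingBr hbb hgg.
    rewrite (pairing_sym affsym (ivec k l) beta); lia.
  have := hq w i hb (ivec k l).
  have -> : scoroot i = sroot i by [].
  rewrite (actY_X affsym) -hb hbg.
  have hne' : ivec k l <> beta.
    by move=> e; move: (hj (oi k n)); rewrite -e hj0 addr0 => /eqP; lia.
  have hpos : pos_root A (ivec k l) by split => // j; exact: ivec_ge0.
  have hneg : neg_root A (actX A (w ++ i :: rev w) (ivec k l)).
    split; first exact: root_act.
    move=> j; rewrite (refl_formula affsym affdiag) -hb hbg !mxE hj.
    have := ivec_ge0 k l j; move: (ivec k l 0 j) => z hz; lia.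
  by move=> /(_ hpos hneg hne').
- move=> [k [l [hl ->]]].
  rewrite -/(ivec k l).
  have hlN : (l < N)%N by lia.
  have hbr := ivec_root k hl.
  have hbb : pairing A (ivec k l) (ivec k l) = 2 := root_norm affsym affdiag hbr.
  have hj0 : (ivec k l) 0 (oi k n) = 0.
    by rewrite ivec_oi // leqNgt (_ : (l < n)%N = true) //; lia.
  split; first by split => // j; exact: ivec_ge0.
  move=> w i hb gam [hgr hgn] [hvr hvn] hne.
  have -> : scoroot i = sroot i by [].
  rewrite (actY_X affsym) -hb.
  set c := pairing A (ivec k l) gam.
  have hv : actX A (w ++ i :: rev w) gam = gam - c *: ivec k l.
    by rewrite (refl_formula affsym affdiag) -hb.
  have hvv := root_norm affsym affdiag hvr.
  have hgg := root_norm affsym affdiag hgr.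
  have hQ : pairing A (gam - ivec k l) (gam - ivec k l) = 4 - 2 * c.
    rewrite (pairingBl affsym) !pairingBr hbb hgg.
    rewrite (pairing_sym affsym gam (ivec k l)) -/c; ring.
  clearbody c.
  have hc2 : c <= 2 by have := Q_ge0 (gam - ivec k l); rewrite hQ; lia.
  have hc1 : 1 <= c.
    case: (lerP 1 c) => // hc0; exfalso.
    have hv0 : actX A (w ++ i :: rev w) gam = 0.
      apply/matrixP => a j; rewrite (ord1 a) [RHS]mxE.
      have := hvn j; rewrite hv !mxE => h1.
      have := hgn j; have := ivec_ge0 k l j.
      move: (ivec k l 0 j) (gam 0 j) h1 => z y h1 hz hy; nia.
    by move: hvv; rewrite hv0 -(scale0r 0) pairingZr mul0r.
  case: (eqVneq c 2) => hc; last by lia.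
  exfalso; apply: hne.
  have hcst := Q0_const (u := gam - ivec k l) (ltac:(rewrite hQ hc; ring)).
  have hm : (gam - ivec k l) 0 (oi k n) = 0.
    have := hvn (oi k n); have := hgn (oi k n).
    rewrite hv !mxE hj0 hc; move: (gam 0 (oi k n)) => z; lia.
  apply/matrixP => a j; rewrite (ord1 a).
  have e := hcst j (oi k n); rewrite hm !mxE in e.
  by apply/eqP; rewrite -subr_eq0 e.
Qed.

End Aff.

Theorem proposition2p32 (n : nat) (hn : (2 <= n)%N) (beta : 'rV[int]_n.+1) :
  quantum (affA n) beta <->
  exists (k : 'I_n.+1) (l : nat),
    (l <= n - 1)%N /\
    beta = \sum_(t < l.+1) sroot (inord ((k + t) %% n.+1) : 'I_n.+1).
Proof. exact: (@main n hn beta). Qed.
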